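(* Let $K$ be a field with a non-Archimedean valuation $\mathrm{val}:K\to\mathbb{T}$, let $n\ge1$, let $Q=(V,A,s,t)$ be a finite quiver and $R$ a $Q$-representation with $R_i=K^n$ for all $i\in V$, where each arrow $\alpha$ is represented by a weakly monomial matrix $A^{\alpha}\in K^{n\times n}$. Let $\mathbf{d}=(d_i)_{i\in V}$ with $0\le d_i\le n$ and let $\boldsymbol{\mu}=(\mu_i)_{i\in V}$ be valuated matroids on $[n]$ with $\mu_i$ of rank $d_i$. Then the following are equivalent: (a) $\boldsymbol{\mu}\in\operatorname{QDr}(R,\mathbf{d};n)$; (b) $\mathrm{val}(A^{\alpha})\odot\overline{\operatorname{trop}}(\mu_{s(\alpha)})\subseteq\overline{\operatorname{trop}}(\mu_{t(\alpha)})$ for all $\alpha\in A$; (c) for every arrow $\alpha$, the map $f_\alpha$ associated to $A^\alpha$ is a (contravariant) affine morphism of valuated matroids from $\mu_{t(\alpha)}$ to $\mu_{s(\alpha)}$, i.e. $f_\alpha^{-1}(\mu_{s(\alpha)})\twoheadleftarrow(\mu_{t(\alpha)})_o$.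
   Context: Tropical conventions: $\mathbb{T}=\mathbb{R}\cup\{\infty\}$, $a\oplus b=\min$, $a\odot b=a+b$, $\mathbb{P}(\mathbb{T}^N)=(\mathbb{T}^N\setminus\{(\infty,\dots,\infty)\})/\mathbb{R}\mathbf{1}$; $\mathrm{val}(0)=\infty$; for a matrix $M$, $(\mathrm{val}(M)\odot v)_i=\min_j(\mathrm{val}(M_{ij})+v_j)$, applied pointwise to sets. Valuated matroid of rank $r$ on a finite set $E$: $\nu:\binom{E}{r}\to\mathbb{T}$, not identically $\infty$, such that for all $I,J\in\binom{E}{r}$, $i\in I\setminus J$ there is $j\in J\setminus I$ with $\nu(I)+\nu(J)\ge\nu((I\setminus i)\cup j)+\nu((J\setminus j)\cup i)$; considered up to additive constants. Convention: $\nu(S)=\infty$ if $|S|\ne r$. Tropical linear space $\overline{\operatorname{trop}}(\nu)\subseteq\mathbb{P}(\mathbb{T}^E)$: the set of $x$ such that for each $I\in\binom{E}{r+1}$ with $C_\nu(I)\ne(\infty,\dots)$ (where $C_\nu(I)_e=\nu(I\setminus e)$ for $e\in I$, $\infty$ else), $\min_e(C_\nu(I)_e+x_e)$ is attained at least twice ($\infty$ counts as twice). Quotient: for $\mu,\nu$ on $E$ of ranks $r\le s$, $\mu\twoheadleftarrow\nu$ if for all $I\in\binom{E}{r}$, $J\in\binom{E}{s}$, $i\in I\setminus J$ there is $j\in J\setminus I$ with $\mu(I)+\nu(J)\ge\mu(I\cup j\setminus i)+\nu(J\cup i\setminus j)$. Pointed matroid: for $\nu$ on $[n]$, $\nu_o$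 on $[n]\cup\{o\}$ agrees with $\nu$ on sets avoiding $o$ and is $\infty$ on sets containing $o$ (so $o$ is a loop). For $f=(f_1,f_2):[n]\cup\{o\}\to([n]\cup\{o\})\times\mathbb{T}$ with $S=f_1([n]\cup\{o\})$, let $\nu_o|_S$ be the restriction of the valuated matroid $\nu_o$ to $S$, of rank $r'$. The affine induced valuated matroid is $f^{-1}(\nu)(B)=\nu_o|_S(f_1(B))+\sum_{i\in B}f_2(i)$ for $B\subseteq[n]\cup\{o\}$, $|B|=r'$ (value $\infty$ if $|f_1(B)|<r'$). $f$ is an affine morphism of valuated matroids from $\mu$ to $\nu$ if $f^{-1}(\nu)\twoheadleftarrow\mu_o$. A matrix is weakly monomial if each row has at most one nonzero entry. The map associated to a weakly monomial $M\in K^{n\times n}$ is $f(o)=(o,\infty)$, $f(i)=(o,\infty)$ if row $i$ is zero, and $f(i)=(j,\mathrm{val}(M_{ij}))$ if $M_{ij}\ne0$. Quiver Dressian $\operatorname{QDr}(R,\mathbf{d};n)$: tuples $(p^{(i)})_{i\in V}$, $p^{(i)}\in\mathbb{P}(\mathbb{T}^{\binom{n}{d_i}})$, such that for each vertex $i$ ($r=d_i$) and $I\in\binom{[n]}{r-1}$, $J\in\binom{[n]}{r+1}$, $\min_{j\in J\setminus I}(p^{(i)}_{I\cup j}+p^{(i)}_{J\setminus j})$ is attained at least twice, and for each arrow $\alpha$ ($r=d_{s(\alpha)}$, $s=d_{t(\alpha)}$) and $I\in\binom{[n]}{r-1}$, $J\in\binom{[n]}{s+1}$, $\min_{j\in[n]\setminus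 I,i\in J}(\mathrm{val}(A^\alpha_{i,j})+p^{(s(\alpha))}_{I\cup j}+p^{(t(\alpha))}_{J\setminus i})$ is attained at least twice ($\infty$ counts as twice). *)

(* Defs.v *)
From HB Require Import structures.
From mathcomp Require Import all_boot all_order all_algebra.
From mathcomp Require Import reals.
Set Implicit Arguments. Unset Strict Implicit. Unset Printing Implicit Defensive.
Import Order.TTheory GRing.Theory Num.Theory.
Local Open Scope ring_scope.

(* ---------- Tropical semiring T = R ∪ {∞} (None = ∞) ---------- *)
Definition trop (R : realType) := option R.

Section Tropical.
Variable R : realType.

Definition tadd (a b : trop R) : trop R :=
  match a, b with Some x, Some y => Some (x + y) | _, _ => None end.

Definition tle (a b : trop R) : bool :=
  match a, b with
  | _, None => true
  | None, Some _ => false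
  | Some x, Some y => x <= y
  end.

Definition tmin (a b : trop R) : trop R := if tle a b then a else b.

Definition min_twice (I : finType) (P : pred I) (F : I -> trop R) : Prop :=
  (forall k, P k -> F k = None) \/
  exists i j, [/\ i != j, P i, P j, F i = F j & forall k, P k -> tle (F i) (F k)].

Definition is_valuation (K : fieldType) (val : K -> trop R) : Prop :=
  [/\ forall x, val x = None <-> x = 0,
      forall x y, val (x * y) = tadd (val x) (val y) &
      forall x y, tle (tmin (val x) (val y)) (val (x + y))].

Definition valuated_matroid (E : finType) (r : nat) (nu : {set E} -> trop R) : Prop :=
  [/\ exists B : {set E}, #|B| = r /\ nu B <> None,
      forall B : {set E}, #|B| <> r -> nu B = None &
      forall I J : {set E}, #|I| = r -> #|J| = r -> forall i, i \in I :\: J ->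
        exists2 j, j \in J :\: I &
          tle (tadd (nu (I :\ i :|: [set j])) (nu (J :\ j :|: [set i])))
              (tadd (nu I) (nu J))].

Definition vm_quotient (E : finType) (r s : nat) (mu nu : {set E} -> trop R) : Prop :=
  (r <= s)%N /\
  forall I J : {set E}, #|I| = r -> #|J| = s -> forall i, i \in I :\: J ->
    exists2 j, j \in J :\: I &
      tle (tadd (mu (I :\ i :|: [set j])) (nu (J :\ j :|: [set i])))
          (tadd (mu I) (nu J)).

Definition circ (E : finType) (nu : {set E} -> trop R) (I : {set E}) (e : E) : trop R :=
  if e \in I then nu (I :\ e) else None.

Definition in_trop (E : finType) (r : nat) (nu : {set E} -> trop R) (x : E -> trop R) : Prop :=
  forall I : {set E}, #|I| = r.+1 -> (exists e, circ nu I e <> None) ->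
    min_twice predT (fun e => tadd (circ nu I e) (x e)).

Definition tmatvec (K : fieldType) (val : K -> trop R) (n : nat) (M : 'M[K]_n)
  (v : 'I_n -> trop R) : 'I_n -> trop R :=
  fun i => \big[tmin/None]_(j < n) tadd (val (M i j)) (v j).

(* [n] ∪ {o} is  option 'I_n,  with o = None *)
Definition pointed (n : nat) (nu : {set 'I_n} -> trop R) : {set option 'I_n} -> trop R :=
  fun B => if None \in B then None else nu [set x | Some x \in B].

Definition rk_in (E : finType) (r : nat) (nu : {set E} -> trop R) (S : {set E}) : nat :=
  \max_(B : {set E} | (#|B| == r) && (nu B != None)) #|B :&: S|.

Definition restr (E : finType) (r : nat) (nu : {set E} -> trop R) (S : {set E})
  : {set E} -> trop R :=
  fun B => if (B \subset S) && (#|B| == rk_in r nu S) then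
             \big[tmin/None]_(B' : {set E} | (#|B'| == r) && (B' :&: S == B)) nu B'
           else None.

Definition img1 (n : nat) (f : option 'I_n -> option 'I_n * trop R) : {set option 'I_n} :=
  [set (f x).1 | x in [set: option 'I_n]].

Definition induced_rank (n r : nat) (nu : {set 'I_n} -> trop R)
  (f : option 'I_n -> option 'I_n * trop R) : nat :=
  rk_in r (pointed nu) (img1 f).

Definition induced (n r : nat) (nu : {set 'I_n} -> trop R)
  (f : option 'I_n -> option 'I_n * trop R) : {set option 'I_n} -> trop R :=
  fun B =>
    let r' := induced_rank r nu f in
    if (#|B| == r') && (#|[set (f x).1 | x in B]| == r') then
      tadd (restr r (pointed nu) (img1 f) [set (f x).1 | x in B])
           (\big[tadd/Some 0]_(i in B) (f i).2)
    else None.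

Definition affine_morphism (n : nat) (rmu rnu : nat) (mu nu : {set 'I_n} -> trop R)
  (f : option 'I_n -> option 'I_n * trop R) : Prop :=
  vm_quotient (induced_rank rnu nu f) rmu (induced rnu nu f) (pointed mu).

Definition weakly_monomial (K : fieldType) (n : nat) (M : 'M[K]_n) : Prop :=
  forall i j k, M i j != 0 -> M i k != 0 -> j = k.

Definition wm_map (K : fieldType) (val : K -> trop R) (n : nat) (M : 'M[K]_n)
  : option 'I_n -> option 'I_n * trop R :=
  fun x => match x with
           | None => (None, None)
           | Some i => match [pick j | M i j != 0] with
                       | Some j => (Some j, val (M i j))
                       | None => (None, None)
                       end
           end.

Definition QDr (K : fieldType) (val : K -> trop R) (n : nat) (V Ar : finType)
  (s t : Ar -> V) (A : Ar -> 'M[K]_n) (d : V -> nat)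
  (p : V -> {set 'I_n} -> trop R) : Prop :=
  [/\ forall v, exists B : {set 'I_n}, #|B| = d v /\ p v B <> None,
      forall v (I J : {set 'I_n}), #|I|.+1 = d v -> #|J| = (d v).+1 ->
        min_twice (fun j => j \in J :\: I)
                  (fun j => tadd (p v (j |: I)) (p v (J :\ j))) &
      forall a (I J : {set 'I_n}), #|I|.+1 = d (s a) -> #|J| = (d (t a)).+1 ->
        min_twice (fun ji : 'I_n * 'I_n => (ji.1 \notin I) && (ji.2 \in J))
                  (fun ji => tadd (val (A a ji.2 ji.1))
                                  (tadd (p (s a) (ji.1 |: I)) (p (t a) (J :\ ji.2))))].

End Tropical.

(* Main.v *)
Require Import Defs.
From HB Require Import structures.
From mathcomp Require Import all_boot all_order all_algebra.
From mathcomp Require Import reals.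
From mathcomp Require Import ring lra zify.
Set Implicit Arguments. Unset Strict Implicit. Unset Printing Implicit Defensive.
Import Order.TTheory GRing.Theory Num.Theory.
Local Open Scope ring_scope.

Section TropBasics.
Variable R : realType.
Local Notation T := (trop R).

Lemma tle_refl (a : T) : tle a a.
Proof. by case: a => //= x; exact: lexx. Qed.

Lemma tle_total (a b : T) : tle a b || tle b a.
Proof. by case: a; case: b => //= x y; exact: le_total. Qed.

Lemma tle_trans (b a c : T) : tle a b -> tle b c -> tle a c.
Proof. by case: a; case: b; case: c => //= x y z; apply: le_trans. Qed.

Lemma tle_anti (a b : T) : tle a b -> tle b a -> a = b.
Proof. by case: a; case: b => //= x y h1 h2; congr Some; apply/eqP; rewrite eq_le h1 h2. Qed.

Lemma tleN (a : T) : tle a None.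
Proof. by case: a. Qed.

Lemma tminA : associative (@tmin R).
Proof.
move=> a b c; rewrite /tmin.
case ab: (tle a b); case bc: (tle b c); case ac: (tle a c); rewrite ?ab ?bc ?ac //.
- by rewrite (tle_trans ab bc) in ac.
- have := tle_total a b; rewrite ab /= => ba.
  have := tle_total b c; rewrite bc /= => cb.
  by rewrite (tle_anti (tle_trans cb ba) ac).
Qed.

Lemma tminC : commutative (@tmin R).
Proof.
move=> a b; rewrite /tmin.
case ab: (tle a b); case ba: (tle b a) => //.
- exact: tle_anti.
- by have := tle_total a b; rewrite ab ba.
Qed.

Lemma tmin0 : left_id None (@tmin R).
Proof. by move=> a; rewrite /tmin; case: a. Qed.

Lemma taddA : associative (@tadd R).
Proof. by case=> [x|]; case=> [y|]; case=> [z|] //=; rewrite addrA. Qed.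
Lemma taddC : commutative (@tadd R).
Proof. by case=> [x|]; case=> [y|] //=; rewrite addrC. Qed.
Lemma tadd0 : left_id (Some 0) (@tadd R).
Proof. by case=> [x|] //=; rewrite add0r. Qed.

End TropBasics.

HB.instance Definition _ (R : realType) :=
  Monoid.isComLaw.Build (trop R) None (@tmin R) (@tminA R) (@tminC R) (@tmin0 R).
HB.instance Definition _ (R : realType) :=
  Monoid.isComLaw.Build (trop R) (Some 0) (@tadd R) (@taddA R) (@taddC R) (@tadd0 R).

Section TropBig.
Variable R : realType.
Local Notation T := (trop R).

Lemma tmin_le_l (a b : T) : tle (tmin a b) a.
Proof. rewrite /tmin; case ab: (tle a b); first exact: tle_refl.
by have := tle_total a b; rewrite ab. Qed.

Lemma big_tmin_le (I : finType) (P : pred I) (F : I -> T) k :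
  P k -> tle (\big[@tmin R/None]_(i | P i) F i) (F k).
Proof. by move=> Pk; rewrite (bigD1 k) //=; apply: tmin_le_l. Qed.

Lemma big_tmin_att (I : finType) (P : pred I) (F : I -> T) :
  \big[@tmin R/None]_(i | P i) F i = None \/
  exists2 k, P k & \big[@tmin R/None]_(i | P i) F i = F k.
Proof.
apply: (big_ind (fun x => x = None \/ exists2 k, P k & x = F k)).
- by left.
- move=> x y hx hy; rewrite /tmin; case: (tle x y); [exact: hx | exact: hy].
- by move=> i Pi; right; exists i.
Qed.

Lemma big_tadd_None (I : finType) (P : pred I) (F : I -> T) :
  \big[@tadd R/Some 0]_(i | P i) F i = None -> exists2 k, P k & F k = None.
Proof.
apply: (big_ind (fun x => x = None -> exists2 k, P k & F k = None)) => //.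
- move=> [x|] [y|] //= hx hy _; by [apply: hy | apply: hx].
- by move=> i Pi h; exists i.
Qed.

End TropBig.

Section MinTwice.
Variable R : realType.
Local Notation T := (trop R).

Definition uniq_min (I : finType) (P : pred I) (F : I -> T) k :=
  [/\ P k, F k != None & forall k', P k' -> k' != k -> ~~ tle (F k') (F k)].

Lemma exists_tmin (I : finType) (P : pred I) (F : I -> T) k0 :
  P k0 -> exists2 m, P m & forall k, P k -> tle (F m) (F k).
Proof.
move=> Pk0; case: (big_tmin_att P F) => [h|[m Pm hm]].
- exists k0 => // k Pk; have := big_tmin_le F Pk; rewrite h.
  have := big_tmin_le F Pk0; rewrite h.
  by case: (F k0) => //; case: (F k).
- by exists m => // k Pk; rewrite -hm; apply: big_tmin_le.
Qed.

Lemma min_twiceP (I : finType) (P : pred I) (F : I -> T) :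
  min_twice P F <-> forall k, ~ uniq_min P F k.
Proof.
split.
- case=> [hN k [Pk Fk _]|[i [j [ij Pi Pj Fij hmin]]] k [Pk Fk hk]].
  + by rewrite hN in Fk.
  + case: (eqVneq i k) => [ik|ik].
    * subst k; have := hk j Pj; rewrite eq_sym ij => /(_ isT).
      by rewrite -Fij tle_refl.
    * by have := hk i Pi ik; rewrite hmin.
- move=> h.
  case: (boolP [exists k, P k && (F k != None)]) => [/existsP [k0 /andP [Pk0 Fk0]]|hno].
  + right; have [m Pm hm] := exists_tmin F Pk0.
    have Fm : F m != None.
      by move: (hm _ Pk0) Fk0; case: (F m) => //; case: (F k0).
    case: (boolP [exists k', [&& P k', k' != m & tle (F k') (F m)]]).
    * move=> /existsP [k' /and3P [Pk' km hle]].
      exists m, k'; split => //; first by rewrite eq_sym.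
      by apply: tle_anti => //; apply: hm.
    * move=> hne; exfalso; apply: (h m); split => // k' Pk' km.
      apply/negP => hle; move/existsP: hne; apply; exists k'.
      by rewrite Pk' km hle.
  + left => k Pk; apply/eqP; apply: contraNT hno => hF.
    by apply/existsP; exists k; rewrite Pk.
Qed.

Lemma min_twice_other (I : finType) (P : pred I) (F : I -> T) k :
  min_twice P F -> P k -> F k != None ->
  exists k', [/\ P k', k' != k & tle (F k') (F k)].
Proof.
move=> /min_twiceP h Pk Fk.
case: (boolP [exists k', [&& P k', k' != k & tle (F k') (F k)]]).
- by move=> /existsP [k' /and3P [? ? ?]]; exists k'.
- move=> hne; exfalso; apply: (h k); split => // k' Pk' km.
  apply/negP => hle; move/existsP: hne; apply; exists k'.
  by rewrite Pk' km hle.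
Qed.

End MinTwice.

Lemma ex_minR (R : realType) (I : finType) (P : pred I) (F : I -> R) i0 :
  P i0 -> exists m, P m /\ forall k, P k -> F m <= F k.
Proof. by move=> P0; case: (arg_minP F P0) => m Pm hm; exists m. Qed.

Lemma ex_maxN (I : finType) (P : pred I) (F : I -> nat) i0 :
  P i0 -> exists m, P m /\ forall k, P k -> (F k <= F m)%N.
Proof. by move=> P0; case: (arg_maxnP F P0) => m Pm hm; exists m. Qed.

Lemma ex_minN (I : finType) (P : pred I) (F : I -> nat) i0 :
  P i0 -> exists m, P m /\ forall k, P k -> (F m <= F k)%N.
Proof. by move=> P0; case: (arg_minnP F P0) => m Pm hm; exists m. Qed.

Section SetFacts.
Variable E : finType.
Implicit Types (A B : {set E}) (x y : E).

Lemma setU1D1 x A : x \notin A -> (x |: A) :\ x = A.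
Proof. move=> xA; apply/setP => z; rewrite !inE; case: (eqVneq z x) => [->|] /=; [by rewrite (negbTE xA)|by []]. Qed.

Lemma setD1U1 x A : x \in A -> x |: (A :\ x) = A.
Proof. move=> xA; apply/setP => z; rewrite !inE; case: (eqVneq z x) => [->|] /=; [by rewrite xA|by []]. Qed.

Lemma card_U1 x A : x \notin A -> #|x |: A| = #|A|.+1.
Proof. by move=> xA; rewrite cardsU1 xA. Qed.

Lemma card_D1 x A : x \in A -> #|A :\ x| = #|A|.-1.
Proof. by move=> xA; rewrite (cardsD1 x A) xA. Qed.

Lemma swap1 A i j : i \in A -> j \notin A -> A :\ i :|: [set j] = j |: (A :\ i).
Proof. by move=> _ _; rewrite setUC. Qed.

End SetFacts.

Section VM.
Variable R : realType.
Local Notation T := (trop R).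
Variable E : finType.
Variable r : nat.
Variable nu : {set E} -> T.
Hypothesis H : valuated_matroid r nu.

Lemma vm_None (B : {set E}) : #|B| != r -> nu B = None.
Proof. by case: H => _ HN _ /eqP; apply: HN. Qed.

Lemma vm_card (B : {set E}) : nu B != None -> #|B| = r.
Proof. by move=> h; apply/eqP; apply: contraNT h => /vm_None ->. Qed.

Lemma plucker_core (I I2 : {set E}) e0 :
  #|I|.+1 = r -> #|I2| = r.+1 -> e0 \in I2 :\: I ->
  exists e, [/\ e \in I2 :\: I, e != e0 &
    tle (tadd (nu (e |: I)) (nu (I2 :\ e))) (tadd (nu (e0 |: I)) (nu (I2 :\ e0)))].
Proof.
move=> hI hI2 /setDP [e0I2 e0I].
case: H => _ _ Hx.
have c1 : #|e0 |: I| = r by rewrite card_U1.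
have c2 : #|I2 :\ e0| = r by rewrite card_D1 // hI2.
have hi : e0 \in (e0 |: I) :\: (I2 :\ e0) by rewrite !inE eqxx.
have [j hj hle] := Hx _ _ c1 c2 e0 hi.
move: hj; rewrite !inE negb_or => /andP [/andP [je0 jI2] /andP [_ jI]].
exists j; split => //; first by rewrite !inE jI jI2.
move: hle; rewrite setU1D1 // setUC.
have -> : I2 :\ e0 :\ j :|: [set e0] = I2 :\ j.
  apply/setP => z; rewrite !inE; case: (eqVneq z e0) => [->|] /=.
  - by rewrite eq_sym je0.
  - by rewrite orbF.
done.
Qed.

Lemma vm_vertex (I J : {set E}) :
  #|I|.+1 = r -> #|J| = r.+1 ->
  min_twice (fun j => j \in J :\: I) (fun j => tadd (nu (j |: I)) (nu (J :\ j))).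
Proof.
move=> hI hJ; apply/min_twiceP => e0 [P0 F0 hs].
have [e [eP ee0 hle]] := plucker_core hI hJ P0.
by have := hs e eP ee0; rewrite hle.
Qed.

Lemma vm_cocircuit (I : {set E}) :
  #|I|.+1 = r -> in_trop r nu (fun j => nu (j |: I)).
Proof.
move=> hI I2 hI2 _; apply/min_twiceP => e0 [_ F0 hs].
have e0I2 : e0 \in I2 by move: F0; rewrite /circ; case: (e0 \in I2).
have e0I : e0 \notin I.
  apply/negP => e0I; move: F0; rewrite (setUidPr _); last by rewrite sub1set.
  rewrite (@vm_None I); first by case: (circ _ _ _).
  by rewrite -hI neq_ltn ltnSn.
have P0 : e0 \in I2 :\: I by rewrite inE e0I.
have [e [eP ee0 hle]] := plucker_core hI hI2 P0.
have := hs e isT ee0; rewrite /circ (setDP eP).1 e0I2.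
by rewrite taddC [X in tle _ X]taddC hle.
Qed.
End VM.

Section Lift.
Variable n : nat.
Local Notation E := 'I_n.
Local Notation Eo := (option 'I_n).
Implicit Types (X : {set E}) (Y : {set Eo}).

Definition lift (X : {set E}) : {set Eo} := Some @: X.
Definition unlift (Y : {set Eo}) : {set E} := [set x | Some x \in Y].

Lemma mem_lift X (x : E) : (Some x \in lift X) = (x \in X).
Proof. by rewrite mem_imset //; move=> a b []. Qed.

Lemma None_lift X : (None \in lift X) = false.
Proof. by apply/negbTE/imsetP => [[x _]]. Qed.

Lemma card_lift X : #|lift X| = #|X|.
Proof. by rewrite card_imset //; move=> a b []. Qed.

Lemma unliftK X : unlift (lift X) = X.
Proof. by apply/setP => x; rewrite inE mem_lift. Qed.

Lemma liftK Y : None \notin Y -> lift (unlift Y) = Y.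
Proof.
move=> hN; apply/setP => [[x|]]; first by rewrite mem_lift inE.
by rewrite None_lift (negbTE hN).
Qed.

Lemma lift_inj : injective lift.
Proof. by move=> X X' h; rewrite -(unliftK X) h unliftK. Qed.

Lemma liftU1 (x : E) X : lift (x |: X) = Some x |: lift X.
Proof. by rewrite /lift imsetU1. Qed.

Lemma liftD1 (x : E) X : lift (X :\ x) = lift X :\ Some x.
Proof.
apply/setP => [[y|]]; rewrite ?inE ?mem_lift ?inE //.
by rewrite !None_lift.
Qed.

Lemma liftI X X' : lift (X :&: X') = lift X :&: lift X'.
Proof.
apply/setP => [[y|]]; rewrite ?inE ?mem_lift ?inE //.
by rewrite !None_lift.
Qed.

Lemma pointed_lift (R : realType) (nu : {set E} -> trop R) X : pointed nu (lift X) = nu X.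
Proof. rewrite /pointed None_lift; exact: (congr1 nu (unliftK X)). Qed.

Lemma pointed_fin (R : realType) (nu : {set E} -> trop R) Y :
  pointed nu Y != None -> None \notin Y /\ Y = lift (unlift Y).
Proof.
rewrite /pointed; case: ifP => // hN _; split; first exact: negbT.
by rewrite liftK //; apply: negbT.
Qed.

End Lift.

Section Arrow.
Variable R : realType.
Local Notation T := (trop R).
Variables (K : fieldType) (val : K -> T).
Hypothesis Hval : is_valuation val.
Variable n : nat.
Local Notation E := 'I_n.
Local Notation Eo := (option 'I_n).
Variable M : 'M[K]_n.
Hypothesis HM : weakly_monomial M.
Variables (rs rt : nat) (mu nu : {set E} -> T).
Hypothesis Hmu : valuated_matroid rs mu.
Hypothesis Hnu : valuated_matroid rt nu.

Local Notation F i j := (val (M i j)).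
Local Notation f := (wm_map val M).
Definition fi (i : E) := (f (Some i)).1.
Definition wi (i : E) := (f (Some i)).2.

Lemma valN0 x : (val x == None) = (x == 0).
Proof. by case: Hval => h _ _; apply/eqP/eqP => /h. Qed.

Lemma fiP i j : (fi i == Some j) = (F i j != None).
Proof.
rewrite /fi /=; case: pickP => [j' hj'|hN] /=.
- rewrite valN0; apply/eqP/idP => [[<-] //|hj]; congr Some.
  exact: (HM hj' hj).
- by rewrite valN0 hN.
Qed.

Lemma wi_eq i j : fi i = Some j -> wi i = F i j.
Proof.
rewrite /fi /wi /=; case: pickP => [j' hj'|hN] //= [<-] //.
Qed.

Lemma wi_None i : fi i = None -> wi i = None.
Proof. by rewrite /fi /wi /=; case: pickP => [j' hj'|hN]. Qed.

Lemma F_eq i j : F i j = if fi i == Some j then wi i else None.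
Proof.
case: ifP => [/eqP h|h]; first by rewrite (wi_eq h).
by apply/eqP; rewrite -[_ == _]negbK -fiP h.
Qed.

Lemma fNone : f None = (None, None).
Proof. by []. Qed.

Lemma fi_fin i : fi i != None -> wi i != None.
Proof.
case h: (fi i) => [j|] // _; rewrite (wi_eq h); by rewrite -fiP h.
Qed.

Lemma tmatvec_eq x i :
  tmatvec val M x i = if fi i is Some j then tadd (wi i) (x j) else None.
Proof.
rewrite /tmatvec; case h: (fi i) => [j|].
- rewrite (bigD1 j) //= big1 ?[X in tmin _ X]/= ?tmin_N.
  + by rewrite (wi_eq h) /tmin tleN.
  + move=> k kj; rewrite F_eq h; case: eqP => // [[kj']]; by rewrite kj' eqxx in kj.
- rewrite big1 // => k _; by rewrite F_eq h.
Qed.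


Lemma taddNr (a : T) : tadd a None = None. Proof. by case: a. Qed.
Lemma taddNl (a : T) : tadd None a = None. Proof. by []. Qed.
Lemma tleNl (a : T) : tle None a = (a == None). Proof. by case: a. Qed.

Definition QA := forall I J : {set E}, #|I|.+1 = rs -> #|J| = rt.+1 ->
  min_twice (fun ji : E * E => (ji.1 \notin I) && (ji.2 \in J))
            (fun ji => tadd (F ji.2 ji.1) (tadd (mu (ji.1 |: I)) (nu (J :\ ji.2)))).

Definition QB := forall x : E -> T, in_trop rs mu x -> in_trop rt nu (tmatvec val M x).

Lemma yterm_eq (x : E -> T) J i j : fi i = Some j ->
  tadd (circ nu J i) (tmatvec val M x i) =
  if i \in J then tadd (F i j) (tadd (x j) (nu (J :\ i))) else None.
Proof.
move=> h; rewrite tmatvec_eq h /circ (wi_eq h); case: ifP => // _.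
by rewrite taddC taddA.
Qed.

Lemma L_BA : QB -> QA.
Proof.
move=> HB I J hI hJ; apply/min_twiceP => [[j0 i0]] [/andP [/= j0I i0J] /= F0 hs].
have hx := vm_cocircuit Hmu hI.
have hfi0 : fi i0 = Some j0.
  by apply/eqP; rewrite fiP; move: F0; case: (F i0 j0).
have cne : exists e, circ nu J e <> None.
  exists i0; rewrite /circ i0J; move: F0; case: (nu (J :\ i0)) => //.
  by rewrite !taddNr.
have hy := HB _ hx J hJ cne.
apply: (proj1 (min_twiceP _ _) hy i0); split => //.
- by rewrite (yterm_eq _ _ hfi0) i0J.
- move=> k _ ki0; case hk: (fi k) => [j|]; last first.
    by rewrite tmatvec_eq hk taddNr (yterm_eq _ _ hfi0) i0J tleNl.
  rewrite (yterm_eq _ _ hk) (yterm_eq _ _ hfi0) i0J.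
  case: ifP => kJ; last by rewrite tleNl.
  case: (boolP (j \in I)) => jI.
    by rewrite (setUidPr _) ?sub1set // (@vm_None _ _ _ _ Hmu I) ?taddNl ?taddNr ?tleNl // -hI neq_ltn ltnSn.
  have := hs (j, k); rewrite /= jI kJ => /(_ isT).
  rewrite xpair_eqE (negbTE ki0) andbF => /(_ isT).
  by rewrite taddC [tadd (tadd (mu _) _) _]taddC.
Qed.


Ltac setdec := apply/setP => ?; rewrite !inE;
  repeat match goal with |- context [?z == ?y] => case: (z == y) end;
  repeat match goal with |- context [?z \in ?y] => case: (z \in y) end; done.

Lemma tle_add2r (a b c : T) : tle a b -> tle (tadd a c) (tadd b c).
Proof. by case: a; case: b; case: c => //= x y z; rewrite lerD2r. Qed.
Lemma tle_add2l (a b c : T) : tle a b -> tle (tadd c a) (tadd c b).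
Proof. by rewrite ![tadd c _]taddC; apply: tle_add2r. Qed.
Lemma tadd_neqN (a b : T) : tadd a b != None -> a != None /\ b != None.
Proof. by case: a; case: b. Qed.

Definition S := img1 f.
Definition S' := unlift S.
Definition r' := induced_rank rs mu f.
Definition nu' := induced rs mu f.
Definition lam := pointed nu.
Definition im (B : {set Eo}) := [set (f x).1 | x in B].
Definition ws (B : {set Eo}) := \big[@tadd R/Some 0]_(i in B) (f i).2.
Definition rst (X : {set Eo}) := restr rs (pointed mu) S X.

Lemma inS'_fi i j : fi i = Some j -> j \in S'.
Proof. by move=> h; rewrite inE; apply/imsetP; exists (Some i) => //; rewrite -h. Qed.

Lemma inS'P j : j \in S' -> exists i, fi i = Some j.
Proof. by rewrite inE => /imsetP [[i|] _ //= h]; exists i; rewrite /fi h. Qed.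

Lemma im_sub (B : {set Eo}) : im B \subset S.
Proof. by apply: imsetS; apply: subsetT. Qed.

Lemma lift_IS (X : {set E}) : lift (X :&: S') = lift X :&: S.
Proof.
apply/setP => [[y|]]; rewrite ?inE ?mem_lift ?inE //.
by rewrite !None_lift.
Qed.

Lemma r'E : r' = rk_in rs (pointed mu) S.
Proof. by []. Qed.

Lemma rk_bound (B : {set E}) : mu B != None -> (#|B :&: S'| <= r')%N.
Proof.
move=> hB; rewrite r'E /rk_in.
have -> : #|B :&: S'| = #|lift B :&: S| by rewrite -lift_IS card_lift.
apply: (leq_bigmax_cond (lift B)).
by rewrite card_lift (vm_card Hmu hB) eqxx pointed_lift.
Qed.

Lemma rk_att : exists B : {set E}, [/\ #|B| = rs, mu B != None & #|B :&: S'| = r'].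
Proof.
case: Hmu => [[B0 [cB0 hB0]] _ _].
have P0 : (#|lift B0| == rs) && (pointed mu (lift B0) != None).
  by rewrite card_lift cB0 eqxx pointed_lift; apply/eqP.
rewrite r'E /rk_in (bigop.bigmax_eq_arg (lift B0)); last exact: P0.
case: arg_maxnP => // B' /andP [/eqP cB' hB'] _.
have [hN eB'] := pointed_fin hB'.
exists (unlift B'); split.
- by rewrite -card_lift -eB'.
- by rewrite -(pointed_lift mu) -eB'.
- by rewrite -card_lift lift_IS -eB'.
Qed.

Lemma rst_le (Bm : {set E}) : #|Bm| = rs -> #|Bm :&: S'| = r' ->
  tle (rst (lift (Bm :&: S'))) (mu Bm).
Proof.
move=> cB cS; rewrite /rst /restr -r'E.
have -> : (lift (Bm :&: S') \subset S) && (#|lift (Bm :&: S')| == r').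
  by rewrite card_lift cS eqxx lift_IS subsetIr.
rewrite -(pointed_lift mu Bm); apply: big_tmin_le.
by rewrite card_lift cB eqxx lift_IS eqxx.
Qed.

Lemma rst_att (X : {set Eo}) : rst X != None ->
  exists Bm : {set E}, [/\ #|Bm| = rs, lift (Bm :&: S') = X, #|Bm :&: S'| = r' & rst X = mu Bm].
Proof.
rewrite /rst /restr -r'E; case: ifP => // /andP [_ /eqP cX].
case: (big_tmin_att (fun B' : {set Eo} => (#|B'| == rs) && (B' :&: S == X)) (pointed mu))
  => [->|[B' /andP [/eqP cB' /eqP hI] ->]] // hB'.
have [hN eB'] := pointed_fin hB'.
exists (unlift B'); rewrite lift_IS -eB' hI; split => //.
- by rewrite -card_lift -eB'.
- by rewrite -card_lift lift_IS -eB' hI.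
- by rewrite {1}eB' pointed_lift.
Qed.

Lemma ind_eq (B : {set Eo}) : #|B| = r' -> #|im B| = r' -> nu' B = tadd (rst (im B)) (ws B).
Proof. by move=> h1 h2; rewrite /nu' /induced -/r' /im h1 h2 !eqxx. Qed.

Lemma ind_fin (B : {set Eo}) : nu' B != None ->
  [/\ #|B| = r', #|im B| = r', rst (im B) != None & ws B != None].
Proof.
rewrite /nu' /induced -/r'; case: ifP => // /andP [/eqP h1 /eqP h2] h.
by have [? ?] := tadd_neqN h.
Qed.

Lemma ws_U1 e (B : {set Eo}) : e \notin B -> ws (e |: B) = tadd ((f e).2) (ws B).
Proof. by move=> h; rewrite /ws big_setU1. Qed.

Lemma ws_mem (B : {set Eo}) e : ws B != None -> e \in B -> (f e).2 != None.
Proof.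
move=> h eB; apply/negP => /eqP he; move: h; rewrite /ws (bigD1 e) //= he.
by rewrite taddNl.
Qed.

Lemma f2_fin e : (f e).2 != None -> exists i j, e = Some i /\ fi i = Some j.
Proof.
case: e => [i|] // h; exists i; case hi: (fi i) => [j|]; first by exists j.
by move: h; rewrite -/(wi i) (wi_None hi).
Qed.

Lemma im_U1 e (B : {set Eo}) : im (e |: B) = (f e).1 |: im B.
Proof. by rewrite /im imsetU1. Qed.

Lemma im_inj (B : {set Eo}) : #|im B| = #|B| -> {in B &, injective (fun x => (f x).1)}.
Proof. by move=> h; apply/imset_injP; rewrite h. Qed.

Lemma tadd_neq (a b : T) : a != None -> b != None -> tadd a b != None.
Proof. by case: a; case: b. Qed.

Lemma tAC1 (r w s l : T) : tadd (tadd r (tadd w s)) l = tadd (tadd w (tadd r l)) s.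
Proof. by case: r; case: w; case: s; case: l => //= *; congr Some; ring. Qed.

Definition PP := forall I J : {set Eo}, #|I|.+1 = r' -> #|J| = rt.+1 ->
  min_twice (fun e => e \in J :\: I) (fun e => tadd (nu' (e |: I)) (lam (J :\ e))).

Lemma L_AP : QA -> PP.
Proof.
move=> HA I J hI hJ; apply/min_twiceP => e0 [/setDP [e0J e0I] F0 hs].
have [h1 h2] := tadd_neqN F0.
have [cI cim hrst hws] := ind_fin h1.
have [i0 [j0 [ee0 hfi0]]] := f2_fin (ws_mem hws (setU11 e0 I)).
subst e0.
have [hNJ _] := pointed_fin h2.
have [J0 eJ] : exists J0, J = lift J0.
  exists (unlift J); rewrite liftK //; apply: contra hNJ => hN.
  by rewrite !inE hN andbT.
subst J.
have [Bm [cBm eX cBmS hBm]] := rst_att hrst.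
have hinj := im_inj (etrans cim (esym cI)).
have f1i0 : (f (Some i0)).1 = Some j0 by [].
have j0X : Some j0 \in im (Some i0 |: I) by rewrite im_U1 f1i0 setU11.
have j0Bm : j0 \in Bm by move: j0X; rewrite -eX mem_lift inE => /andP [].
have j0imI : Some j0 \notin im I.
  apply/imsetP => [[e eI he]].
  have := hinj (Some i0) e (setU11 _ _) (setU1r _ eI); rewrite f1i0 he => /(_ erefl) h.
  by move: e0I; rewrite h eI.
set I0 := Bm :\ j0.
have imI : im I = lift (I0 :&: S').
  have -> : I0 :&: S' = (Bm :&: S') :\ j0 by rewrite /I0; setdec.
  by rewrite liftD1 eX im_U1 f1i0 setU1K.
have cI0 : #|I0|.+1 = rs by rewrite /I0 -cBm (cardsD1 j0 Bm) j0Bm.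
have cJ0 : #|J0| = rt.+1 by rewrite -card_lift.
have hA := HA I0 J0 cI0 cJ0.
have e1 : mu (j0 |: I0) = rst (im (Some i0 |: I)) by rewrite /I0 setD1U1 // hBm.
have e2 : nu (J0 :\ i0) = lam (lift J0 :\ Some i0) by rewrite /lam -liftD1 pointed_lift.
have e3 : val (M i0 j0) = wi i0 by rewrite (wi_eq hfi0).
have term0 : tadd (nu' (Some i0 |: I)) (lam (lift J0 :\ Some i0)) =
    tadd (tadd (val (M i0 j0)) (tadd (mu (j0 |: I0)) (nu (J0 :\ i0)))) (ws I).
  by rewrite (ind_eq cI cim) (ws_U1 e0I) e1 e2 e3 tAC1.
apply: (proj1 (min_twiceP _ _) hA (j0, i0)); split => /=.
- by rewrite !inE eqxx /= -mem_lift.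
- rewrite e1 e2 e3; apply: tadd_neq; first by apply: fi_fin; rewrite hfi0.
  exact: tadd_neq.
move=> [j i] /andP [/= jI0 iJ0] hne.
rewrite F_eq; case: eqP => [hfi|_]; last first.
  rewrite taddNl tleNl e1 e2 e3; apply: tadd_neq; first by apply: fi_fin; rewrite hfi0.
  exact: tadd_neq.
have ii0 : i != i0.
  apply: contra hne => /eqP ii0; subst i; move: hfi; rewrite hfi0 => [[->]].
  by rewrite eqxx.
have jS : j \in S' by apply: inS'_fi hfi.
have jimI : Some j \notin im I by rewrite imI mem_lift inE (negbTE jI0).
have iI : Some i \notin I.
  by apply: contra jimI => iI; apply/imsetP; exists (Some i) => //.
have iJ : Some i \in lift J0 :\: I by rewrite inE iI mem_lift.
have hs' := hs (Some i) iJ; rewrite (inj_eq (@Some_inj _)) ii0 in hs'.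
have {}hs' := hs' isT.
apply: contra hs' => hle.
have cX1 : #|im (Some i |: I)| = r'.
  by rewrite im_U1 -[(f (Some i)).1]/(fi i) hfi card_U1 // -cim im_U1 f1i0 card_U1.
have cI1 : #|Some i |: I| = r' by rewrite card_U1.
have eX1 : im (Some i |: I) = lift ((j |: I0) :&: S').
  have -> : (j |: I0) :&: S' = j |: (I0 :&: S').
    by apply/setP => z; rewrite in_setI !in_setU1 in_setI; case: (eqVneq z j) => [->|] //=.
  by rewrite liftU1 -imI im_U1 -[(f (Some i)).1]/(fi i) hfi.
have cI1S : #|(j |: I0) :&: S'| = r' by rewrite -card_lift -eX1.
have cJI : #|j |: I0| = rs by rewrite card_U1.
have hrl := rst_le cJI cI1S.
rewrite -eX1 in hrl.
rewrite term0 (ind_eq cI1 cX1) (ws_U1 iI) /lam -liftD1 pointed_lift.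
rewrite -[(f (Some i)).2]/(wi i).
apply: (tle_trans (b := tadd (tadd (mu (j |: I0)) (tadd (wi i) (ws I))) (nu (J0 :\ i)))).
  by apply: tle_add2r; apply: tle_add2r.
by rewrite tAC1; apply: tle_add2r.
Qed.

Definition QC := vm_quotient r' rt nu' lam.

Lemma swapJ (A : finType) (J : {set A}) e0 j : e0 \in J -> j != e0 ->
  J :\ e0 :\ j :|: [set e0] = J :\ j.
Proof.
move=> e0J je0; apply/setP => z; rewrite !inE; case: (eqVneq z e0) => [->|] /=.
- by rewrite eq_sym je0.
- by rewrite orbF.
Qed.

Lemma L_CP : QC -> PP.
Proof.
move=> [_ Hq] I J hI hJ; apply/min_twiceP => e0 [/setDP [e0J e0I] F0 hs].
have c1 : #|e0 |: I| = r' by rewrite card_U1.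
have c2 : #|J :\ e0| = rt by rewrite card_D1 // hJ.
have hi : e0 \in (e0 |: I) :\: (J :\ e0) by rewrite !inE eqxx.
have [j hj hle] := Hq _ _ c1 c2 e0 hi.
move: hj; rewrite !inE negb_or => /andP [/andP [je0 jJ] /andP [_ jI]].
move: hle; rewrite setU1D1 // setUC swapJ // => hle.
have := hs j; rewrite !inE jI jJ je0 => /(_ isT isT).
by rewrite hle.
Qed.

Lemma L_PC : PP -> (r' <= rt)%N -> QC.
Proof.
move=> HP hr; split => // I J cI cJ i /setDP [iI iJ].
case: (boolP (tadd (nu' I) (lam J) == None)) => [/eqP hN|hF].
- case: (set_0Vmem (J :\: I)) => [h0|[j hj]]; last by exists j => //; rewrite hN tleN.
  exfalso; have sJI : J \subset I :\ i.
    by rewrite subsetD1 iJ andbT -setD_eq0 h0.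
  have := subset_leq_card sJI; rewrite card_D1 // cI cJ.
  have : (0 < r')%N by rewrite -cI; apply/card_gt0P; exists i.
  move: hr; clear; lia.
- have c1 : #|I :\ i|.+1 = r'.
    have : (0 < r')%N by rewrite -cI; apply/card_gt0P; exists i.
    rewrite card_D1 // cI; lia.
  have c2 : #|i |: J| = rt.+1 by rewrite card_U1 // cJ.
  have Pi : i \in (i |: J) :\: (I :\ i) by rewrite !inE eqxx.
  have Fi : tadd (nu' (i |: (I :\ i))) (lam ((i |: J) :\ i)) = tadd (nu' I) (lam J).
    by rewrite setD1U1 // setU1D1.
  have Fne : tadd (nu' (i |: (I :\ i))) (lam ((i |: J) :\ i)) != None by rewrite Fi.
  have [k [Pk ki hle]] := min_twice_other (HP _ _ c1 c2) Pi Fne.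
  move: Pk; rewrite !inE (negbTE ki) /= => /andP [kI kJ].
  exists k; first by rewrite inE kI kJ.
  rewrite -Fi setUC.
  have -> : J :\ k :|: [set i] = (i |: J) :\ k.
    apply/setP => z; rewrite !inE; case: (eqVneq z i) => [->|] /=.
    - by rewrite eq_sym ki orbT.
    - by rewrite orbF.
  exact: hle.
Qed.

Definition g (j : E) : E := odflt j [pick i | fi i == Some j].

Lemma g_spec j : j \in S' -> fi (g j) = Some j.
Proof.
move=> /inS'P [i hi]; rewrite /g; case: pickP => [i' /eqP //|/(_ i)].
by rewrite hi eqxx.
Qed.

Lemma g_inj : {in S' &, injective g}.
Proof. by move=> j j' hj hj' e; have := g_spec hj; rewrite e g_spec // => [[]]. Qed.

Lemma L_Ar : QA -> (r' <= rt)%N.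
Proof.
move=> HA; rewrite leqNgt; apply/negP => hlt.
have [Bs [cBs hBs cBsS]] := rk_att.
set X := Bs :&: S'.
set Ph := g @: X.
have cP : #|Ph| = r'.
  rewrite card_in_imset // => a b /setIP [_ ha] /setIP [_ hb]; exact: g_inj.
pose dep (Z : {set E}) :=
  ~~ [exists N : {set E}, [&& #|N| == rt, nu N != None & Z \subset N]].
have depP : (Ph \subset Ph) && dep Ph.
  rewrite subxx /=; apply/existsP => [[N /and3P [/eqP cN _ sPN]]].
  by have := subset_leq_card sPN; rewrite cP cN leqNgt hlt.
have [Z [/andP [ZP dZ] Zmin]] := @ex_minN _ (fun Z : {set E} => (Z \subset Ph) && dep Z) (fun Z : {set E} => #|Z|) Ph depP.
have [Z0|[z0 z0Z]] := set_0Vmem Z.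
  move: dZ; rewrite Z0; case: Hnu => [[N [cN hN]] _ _].
  by move/existsP; apply; exists N; rewrite cN eqxx sub0set andbT; apply/eqP.
have : ~~ dep (Z :\ z0).
  apply/negP => dZ'.
  have := Zmin (Z :\ z0); rewrite dZ' andbT (subset_trans (subD1set _ _) ZP).
  by move=> /(_ isT); rewrite (cardsD1 z0 Z) z0Z add1n ltnn.
rewrite negbK => /existsP [N /and3P [/eqP cN hN sZN]].
have z0N : z0 \notin N.
  apply: contra dZ => z0N; apply/existsP; exists N; rewrite cN eqxx hN /=.
  by rewrite -(setD1U1 z0Z) subUset sub1set z0N.
have [j jX ez0] : exists2 j, j \in X & z0 = g j by apply/imsetP; apply: (subsetP ZP).
have jS : j \in S' by move: jX => /setIP [].
have jBs : j \in Bs by move: jX => /setIP [].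
have hfz : fi z0 = Some j by rewrite ez0 g_spec.
set I0 := Bs :\ j.
set J0 := z0 |: N.
have cI0 : #|I0|.+1 = rs by rewrite /I0 -cBs (cardsD1 j Bs) jBs.
have cJ0 : #|J0| = rt.+1 by rewrite card_U1 // cN.
have hmu : mu (j |: I0) = mu Bs by rewrite /I0 setD1U1.
have hnuN : nu (J0 :\ z0) = nu N by rewrite /J0 setU1D1.
apply: (proj1 (min_twiceP _ _) (HA I0 J0 cI0 cJ0) (j, z0)); split => /=.
- by rewrite !inE eqxx /= eqxx.
- rewrite hmu hnuN; apply: tadd_neq; first by rewrite -fiP hfz.
  exact: tadd_neq.
move=> [j' i'] /andP [/= j'I0 i'J0] hne.
suff -> : tadd (val (M i' j')) (tadd (mu (j' |: I0)) (nu (J0 :\ i'))) = None.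
  rewrite tleNl hmu hnuN; apply: tadd_neq; first by rewrite -fiP hfz.
  exact: tadd_neq.
case: (eqVneq (val (M i' j')) None) => [->|hF] //.
have hfi : fi i' = Some j' by apply/eqP; rewrite fiP.
have i'z0 : i' != z0.
  apply: contra hne => /eqP e; subst i'; move: hfi; rewrite hfz => [[->]].
  by rewrite eqxx.
have i'N : i' \in N by move: i'J0; rewrite !inE (negbTE i'z0).
case: (boolP (i' \in Z)) => i'Z.
  have [j'' j''X ei'] : exists2 j'', j'' \in X & i' = g j'' by apply/imsetP; apply: (subsetP ZP).
  have j''S : j'' \in S' by move: j''X => /setIP [].
  have ej : j'' = j' by apply: Some_inj; rewrite -hfi ei' g_spec.
  rewrite ej in j''X ei'.
  have j'j : j' != j by apply: contra i'z0 => /eqP jj; rewrite ei' ez0 jj.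
  by move: j'I0; rewrite !inE j'j; move: j''X => /setIP [-> _].
case: (eqVneq (nu (J0 :\ i')) None) => [-> | hN']; first by rewrite !taddNr.
exfalso; move/existsP: dZ; apply; exists (J0 :\ i').
rewrite (vm_card Hnu hN') eqxx hN' /=.
rewrite -(setD1U1 z0Z) subUset sub1set !inE eq_sym i'z0 eqxx /=.
apply/subsetP => z /setD1P [zz0 zZ]; rewrite !inE.
have -> : z != i' by apply: contraNneq i'Z => <-.
by rewrite (subsetP sZN) ?orbT // !inE zz0.
Qed.

Lemma tle_fin (a b : T) : tle a b -> b != None -> a != None.
Proof. by case: a; case: b. Qed.

Lemma ws_fin (B : {set Eo}) : (forall e, e \in B -> (f e).2 != None) -> ws B != None.
Proof.
move=> h; apply/negP => /eqP hN; have [e eB he] := big_tadd_None hN.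
by have := h e eB; rewrite he.
Qed.

Lemma sum_U1 (xr : E -> R) (z : E) (A : {set E}) : z \notin A ->
  \sum_(b in z |: A) xr b = xr z + \sum_(b in A) xr b.
Proof. by move=> h; rewrite big_setU1. Qed.

Lemma setDU1 (A C : {set E}) z : z \notin C -> (z |: A) :\: C = z |: (A :\: C).
Proof.
move=> zC; apply/setP => y; rewrite in_setD !in_setU1 in_setD.
by case: (eqVneq y z) => [->|] //=; rewrite zC.
Qed.

Lemma L_PB : PP -> QB.
Proof.
move=> HP x hx J hJ cne.
apply/min_twiceP => i0 [_ F0 hs].
have i0J : i0 \in J by move: F0; rewrite /circ; case: ifP.
case hfi0: (fi i0) => [j0|]; last by move: F0; rewrite tmatvec_eq hfi0 taddNr eqxx.
move: F0; rewrite (yterm_eq _ _ hfi0) i0J => F0.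
have [Fw0 /tadd_neqN [hx0 hnu0]] := tadd_neqN F0.
have j0S : j0 \in S' := inS'_fi hfi0.
pose Tinf := [set j | x j == None].
pose B0 (B : {set E}) := [&& #|B| == rs, mu B != None & #|B :&: S'| == r'].
have [B1 [cB1 hB1 cB1S]] := rk_att.
have PB1 : B0 B1 by rewrite /B0 cB1 hB1 cB1S !eqxx.
have [Bmax [PBmax hmax]] :=
  @ex_maxN _ B0 (fun B : {set E} => #|B :&: S' :&: Tinf|) B1 PB1.
have [CT CTE] : {CT | CT = Bmax :&: S' :&: Tinf} by eexists.
rewrite -CTE in hmax.
have CTS : CT \subset S' by rewrite CTE -setIA subIset // orbC subIset // subxx.
have CTT : forall z, z \in CT -> x z = None.
  by move=> z; rewrite CTE => /setIP [_]; rewrite /Tinf inE => /eqP.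
have j0CT : j0 \notin CT by apply/negP => /CTT; apply/eqP.
pose BB (B : {set E}) := B0 B && (CT \subset B).
have PBmax' : BB Bmax by rewrite /BB PBmax CTE -setIA subsetIl.
have BB_xfin : forall B z, BB B -> z \in B :&: S' -> z \notin CT -> x z != None.
  move=> B z /andP [PB CTB] zBS zCT; apply/negP => /eqP hxz.
  have := hmax B PB.
  have sub : z |: CT \subset B :&: S' :&: Tinf.
    apply/subsetP => w; rewrite in_setU1 => /orP [/eqP -> | wCT].
      by rewrite in_setI zBS /Tinf inE hxz.
    rewrite !in_setI (subsetP CTB _ wCT) (subsetP CTS _ wCT) /Tinf inE.
    by rewrite (CTT _ wCT).
  by have := subset_leq_card sub; rewrite card_U1 //; move=> h1 h2; have := leq_trans h1 h2; rewrite ltnn.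
pose xr j := odflt 0 (x j).
pose Phi (B : {set E}) := odflt 0 (mu B) - \sum_(b in B :&: S' :\: CT) xr b.
have [Bmin [PBmin hmin]] := @ex_minR R _ BB Phi Bmax PBmax'.
have [Bst [PBst j0Bst hst]] :
    exists B, [/\ BB B, j0 \in B & forall B', BB B' -> Phi B <= Phi B'].
  case: (boolP (j0 \in Bmin)) => j0B; first by exists Bmin.
  move: (PBmin) => /andP [/and3P [/eqP cBm hBm /eqP cBmS] CTBm].
  have cI2 : #|j0 |: Bmin| = rs.+1 by rewrite card_U1 // cBm.
  have ci2j0 : circ mu (j0 |: Bmin) j0 = mu Bmin by rewrite /circ setU11 setU1D1.
  have hcirc : exists e, circ mu (j0 |: Bmin) e <> None by exists j0; rewrite ci2j0; apply/eqP.
  have hm := hx _ cI2 hcirc.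
  have T0 : tadd (circ mu (j0 |: Bmin) j0) (x j0) != None by rewrite ci2j0; apply: tadd_neq.
  have [e [_ ej0 hle]] := @min_twice_other _ _ predT _ j0 hm isT T0.
  have /tadd_neqN [hce hxe] := tle_fin hle T0.
  have eI2 : e \in j0 |: Bmin by move: hce; rewrite /circ; case: ifP.
  have eB : e \in Bmin by move: eI2; rewrite in_setU1 (negbTE ej0).
  move: hce hle; rewrite ci2j0 /circ eI2 => hce hle.
  set B' := (j0 |: Bmin) :\ e.
  have eS : e \in S'.
    apply/negPn/negP => eS; have := rk_bound hce.
    have -> : B' :&: S' = j0 |: (Bmin :&: S').
      apply/setP => y; rewrite /B' !(in_setI, in_setD1, in_setU1).
      case: (eqVneq y j0) => [->|yj0] /=; first by rewrite eq_sym ej0 j0S.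
      by case: (eqVneq y e) => [->|] //=; rewrite (negbTE eS) andbF.
    by rewrite card_U1 ?cBmS ?ltnn // in_setI (negbTE j0B).
  have eCT : e \notin CT by apply/negP => /CTT; apply/eqP.
  have eBS : e \in Bmin :&: S' by rewrite in_setI eB eS.
  have PB' : BB B'.
    apply/andP; split; last first.
      apply/subsetP => w wCT; rewrite /B' in_setD1 in_setU1 (subsetP CTBm _ wCT) orbT andbT.
      by apply: contraNneq eCT => <-.
    rewrite /B0 (vm_card Hmu hce) eqxx hce /=.
    have -> : B' :&: S' = j0 |: ((Bmin :&: S') :\ e).
      apply/setP => y; rewrite /B' !(in_setI, in_setD1, in_setU1).
      case: (eqVneq y j0) => [->|yj0] /=; first by rewrite eq_sym ej0 j0S.
      by rewrite andbA.
    rewrite card_U1; last by rewrite in_setD1 in_setI (negbTE j0B) andbF.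
    have r'pos : (0 < r')%N by rewrite -cBmS; apply/card_gt0P; exists e.
    by rewrite card_D1 // cBmS prednK.
  have hPhi : Phi B' <= Phi Bmin.
    rewrite /Phi.
    have eA : e \in Bmin :&: S' :\: CT by rewrite in_setD eCT eBS.
    have -> : B' :&: S' :\: CT = j0 |: ((Bmin :&: S' :\: CT) :\ e).
      apply/setP => y; rewrite /B' !(in_setD1, in_setD, in_setI, in_setU1).
      case: (eqVneq y j0) => [->|yj0] /=; first by rewrite eq_sym ej0 j0S j0CT.
      by case: (y \in CT); case: (y == e); case: (y \in Bmin); case: (y \in S').
    rewrite sum_U1; last by rewrite in_setD1 in_setD in_setI (negbTE j0B) !andbF.
    rewrite (big_setD1 e eA) /= /xr.
    move: hle hce hxe hx0 hBm.
    case: (mu B') => [a|] //; case: (x e) => [b|] //; case: (mu Bmin) => [c|] //.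
    case: (x j0) => [d|] //= hle _ _ _ _.
    lra.
  exists B'; split => //; first by rewrite /B' in_setD1 setU11 eq_sym ej0.
  by move=> B'' PB''; apply: le_trans hPhi (hmin _ PB'').
move: (PBst) => /andP [/and3P [/eqP cBst hBst /eqP cBstS] CTBst].
have j0BS : j0 \in Bst :&: S' by rewrite in_setI j0Bst j0S.
have [Kk KkE] : {Kk | Kk = (Bst :&: S') :\ j0} by eexists.
have eBst : Bst :&: S' = j0 |: Kk by rewrite KkE setD1U1.
have j0K : j0 \notin Kk by rewrite KkE setD11.
have cKk : #|Kk|.+1 = r' by rewrite -cBstS eBst card_U1.
have KkS : Kk \subset S'.
  by rewrite KkE; apply: subset_trans (subD1set _ _) (subsetIr _ _).
have CTK : CT \subset Kk.
  apply/subsetP => w wCT; rewrite KkE in_setD1 in_setI (subsetP CTBst _ wCT) (subsetP CTS _ wCT).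
  have -> : w != j0 by apply/negP => /eqP ej; rewrite -ej wCT in j0CT.
  done.
have [I' I'E] : {I' | I' = lift (g @: Kk)} by eexists.
have cgK : #|g @: Kk| = #|Kk|.
  by rewrite card_in_imset // => a b ha hb; apply: g_inj; apply: (subsetP KkS).
have cI' : #|I'|.+1 = r' by rewrite I'E card_lift cgK.
have cJ' : #|lift J| = rt.+1 by rewrite card_lift.
have imI' : im I' = lift Kk.
  rewrite /im I'E /lift -!imset_comp; apply: eq_in_imset => k kK /=.
  exact: g_spec (subsetP KkS _ kK).
have wsI' : ws I' != None.
  apply: ws_fin => e; rewrite I'E => /imsetP [i /imsetP [k kK ->] ->].
  rewrite -[(f (Some (g k))).2]/(wi (g k)); apply: fi_fin.
  by rewrite g_spec // (subsetP KkS _ kK).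
have i0I' : Some i0 \notin I'.
  rewrite I'E mem_lift; apply/imsetP => [[k kK ei0]].
  move: hfi0; rewrite ei0 g_spec ?(subsetP KkS _ kK) // => /Some_inj ekj.
  by rewrite -ekj kK in j0K.
have nu'eq : forall i j, fi i = Some j -> Some i \notin I' -> j \notin Kk ->
    nu' (Some i |: I') = tadd (rst (lift (j |: Kk))) (tadd (wi i) (ws I')).
  move=> i j hfi iI' jK.
  have eim : im (Some i |: I') = lift (j |: Kk).
    by rewrite im_U1 imI' liftU1 -[(f (Some i)).1]/(fi i) hfi.
  rewrite ind_eq; first by rewrite eim ws_U1.
    by rewrite card_U1.
  by rewrite eim card_lift card_U1.
have lameq : forall i, lam (lift J :\ Some i) = nu (J :\ i).
  by move=> i; rewrite /lam -liftD1 pointed_lift.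
have R0le : tle (rst (lift (j0 |: Kk))) (mu Bst) by rewrite -eBst; apply: rst_le.
have R0fin : rst (lift (j0 |: Kk)) != None by apply: tle_fin R0le hBst.
have wi0 : wi i0 != None by apply: fi_fin; rewrite hfi0.
have T0fin : tadd (nu' (Some i0 |: I')) (lam (lift J :\ Some i0)) != None.
  rewrite (nu'eq _ _ hfi0 i0I' j0K) lameq.
  by apply: tadd_neq => //; apply: tadd_neq => //; apply: tadd_neq.
apply: (proj1 (min_twiceP _ _) (HP _ _ cI' cJ') (Some i0)); split => //.
  by rewrite in_setD i0I' mem_lift.
move=> [i|]; last by rewrite in_setD None_lift andbF.
rewrite in_setD mem_lift => /andP [iI' iJ] ii0.
have ii0' : i != i0 by apply: contra ii0 => /eqP ->.
apply/negP => hle.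
have Tfin := tle_fin hle T0fin.
have [h1 h2] := tadd_neqN Tfin.
have [_ c2 hr hw] := ind_fin h1.
have [i1 [j [ei hfi]]] := f2_fin (ws_mem hw (setU11 _ _)).
case: ei => ei; subst i1.
have jK : j \notin Kk.
  apply/negP => jK; move: c2.
  rewrite im_U1 imI' -[(f (Some i)).1]/(fi i) hfi (setUidPr _); last by rewrite sub1set mem_lift.
  by rewrite card_lift => cKr; move: cKk; rewrite cKr => /eqP; rewrite eqn_leq ltnn.
move: hle h1 h2 hr; rewrite (nu'eq _ _ hfi iI' jK) (nu'eq _ _ hfi0 i0I' j0K) !lameq.
rewrite im_U1 imI' -[(f (Some i)).1]/(fi i) hfi -liftU1.
move=> hle h1 h2 hr.
have [h1a /tadd_neqN [hwi _]] := tadd_neqN h1.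
have hy := hs i isT ii0'.
rewrite (yterm_eq _ _ hfi) iJ (yterm_eq _ _ hfi0) i0J -(wi_eq hfi) -(wi_eq hfi0) in hy.
case: (eqVneq j j0) => [ej|jj0].
  rewrite ej in hle hy.
  move: hle hy R0fin wsI' hx0 wi0 hnu0 hwi h2.
  case: (rst (lift (j0 |: Kk))) => [a|] //; case: (ws I') => [b|] //.
  case: (x j0) => [c|] //; case: (wi i0) => [d|] //; case: (nu (J :\ i0)) => [e|] //.
  case: (wi i) => [u|] //; case: (nu (J :\ i)) => [v|] //= hle hy _ _ _ _ _ _ _.
  move/negP: hy; apply; lra.
have [Bm [cBm eBm cBmS hBm]] := rst_att hr.
have BmS : Bm :&: S' = j |: Kk by apply: lift_inj.
have jCT : j \notin CT by apply: contra jK; apply: (subsetP CTK).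
have hmBm : mu Bm != None by rewrite -hBm.
have PBm : BB Bm.
  apply/andP; split; first by rewrite /B0 cBm hmBm cBmS !eqxx.
  apply/subsetP => w /(subsetP CTK) wK.
  have : w \in Bm :&: S' by rewrite BmS in_setU1 wK orbT.
  by case/setIP.
have xjfin : x j != None.
  by apply: (BB_xfin Bm j PBm) => //; rewrite BmS setU11.
have hPhi := hst Bm PBm.
move: hPhi; rewrite /Phi eBst BmS !setDU1 // !sum_U1; first last.
- by rewrite in_setD (negbTE j0K) andbF.
- by rewrite in_setD (negbTE jK) andbF.
rewrite hBm in hle; rewrite /xr => hPhi.
move: hle hy hPhi R0le R0fin wsI' hx0 wi0 hnu0 hwi h2 hmBm xjfin hBst.
case: (rst (lift (j0 |: Kk))) => [a|] //; case: (ws I') => [b|] //.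
case: (x j0) => [c|] //; case: (wi i0) => [d|] //; case: (nu (J :\ i0)) => [e|] //.
case: (wi i) => [u|] //; case: (nu (J :\ i)) => [v|] //; case: (mu Bm) => [w|] //.
case: (x j) => [z|] //; case: (mu Bst) => [m|] //= hle hy hPhi R0le.
move=> _ _ _ _ _ _ _ _ _ _.
move/negP: hy; apply; lra.
Qed.

Lemma QA_QB : QA <-> QB.
Proof. split; [move=> h; apply: L_PB; exact: L_AP | exact: L_BA]. Qed.

Lemma QA_QC : QA <-> QC.
Proof.
split; first by move=> h; apply: L_PC; [exact: L_AP | exact: L_Ar].
by move=> h; apply: L_BA; apply: L_PB; apply: L_CP.
Qed.

End Arrow.

Theorem theoremB (R : realType) (K : fieldType) (val : K -> trop R)
  (Hval : is_valuation val) (n : nat) (Hn : (1 <= n)%N)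
  (V Ar : finType) (s t : Ar -> V) (A : Ar -> 'M[K]_n)
  (HA : forall a, weakly_monomial (A a))
  (d : V -> nat) (Hd : forall v, (d v <= n)%N)
  (mu : V -> {set 'I_n} -> trop R)
  (Hmu : forall v, valuated_matroid (d v) (mu v)) :
  (QDr val s t A d mu <->
     (forall a (x : 'I_n -> trop R), in_trop (d (s a)) (mu (s a)) x ->
        in_trop (d (t a)) (mu (t a)) (tmatvec val (A a) x))) /\
  (QDr val s t A d mu <->
     (forall a, affine_morphism (d (t a)) (d (s a)) (mu (t a)) (mu (s a))
                                (wm_map val (A a)))).
Proof.
have QDrE : QDr val s t A d mu <->
    forall a, QA val (A a) (d (s a)) (d (t a)) (mu (s a)) (mu (t a)).
  split; first by case=> _ _ h a; exact: h.
  move=> h; split.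
  - by move=> v; case: (Hmu v) => [[B [cB hB]] _ _]; exists B.
  - by move=> v I J hI hJ; apply: vm_vertex.
  - exact: h.
split; rewrite QDrE.
- split=> h a.
  + exact: (proj1 (QA_QB Hval (HA a) _ _ (Hmu (s a))) (h a)).
  + exact: (proj2 (QA_QB Hval (HA a) _ _ (Hmu (s a))) (h a)).
- split=> h a.
  + exact: (proj1 (QA_QC Hval (HA a) (Hmu (s a)) (Hmu (t a))) (h a)).
  + exact: (proj2 (QA_QC Hval (HA a) (Hmu (s a)) (Hmu (t a))) (h a)).
Qed.
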